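(* Let $G$ be a looped simple graph and write $M=M[IAS(G)]$ with rank function $r$. The following are equivalent: (1) $G$ is locally equivalent to a bipartite graph; (2) there are disjoint transversals $T_1,T_2$ of $W(G)$ with $r(T_1)+r(T_2)=|V(G)|$; (3) there are disjoint transversals $T_1,T_2$ with $M|(T_1\cup T_2)=(M|T_1)\oplus(M|T_2)$; (4) there are disjoint transversals $T_1,T_2$ with $M|T_1\cong(M|T_2)^*$.
   Context: A looped simple graph is a finite graph in which each vertex carries at most one loop and no two distinct vertices are joined by more than one edge; ''adjacent'' refers to distinct vertices joined by a non-loop edge. A bipartite graph here is a graph without loops whose vertex set can be partitioned into two sets each containing no two adjacent vertices. $A(G)$ is the $V(G)\times V(G)$ matrix over $GF(2)$ with diagonal entry $1$ exactly at looped vertices and off-diagonal entry $1$ exactly for adjacent pairs. $IAS(G)=(I\mid A(G)\mid A(G)+I)$ over $GF(2)$, rows indexed by $V(G)$; the $v$-columns of the three blocks are labelled $\phi_G(v),\chi_G(v),\psi_G(v)$. $M[IAS(G)]$ is the binary column matroid of $IAS(G)$ on $W(G)=\{\phi_G(v),\chi_G(v),\psi_G(v):v\in V(G)\}$. A transversal is a subset of $W(G)$ containing exactly one element of each vertex triple $\{\phi_G(v),\chi_G(v),\psi_G(v)\}$. $M|T$ denotes restriction, $\oplus$ direct sum, $^*$ the dual matroid. Local equivalence: $G_\ell^v$ complements the loop status of $v$; $G_s^v$ complements the adjacency status of every pair of distinct neighbors of $v$; $G_{ns}^v$ does this and also complements the loop status of every neighbor of $v$. $H$ is locally equivalent to $G$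 if obtained from $G$ by a finite sequence of such operations. *)

(* Defs.v *)
From HB Require Import structures.
From mathcomp Require Import all_boot all_order all_algebra.
Set Implicit Arguments. Unset Strict Implicit. Unset Printing Implicit Defensive.
Import GRing.Theory.
Local Open Scope ring_scope.

(* loopG v : v carries a loop;  adjG u v : u, v distinct and adjacent.
   Simplicity (adjG symmetric and irreflexive) is assumed where needed. *)
Record lgraph (n : nat) := LGraph { loopG : pred 'I_n; adjG : rel 'I_n }.

Definition simple_lgraph n (G : lgraph n) : Prop :=
  symmetric (adjG G) /\ irreflexive (adjG G).

Definition op_l n (v : 'I_n) (G : lgraph n) : lgraph n :=
  LGraph (fun x => if x == v then ~~ loopG G x else loopG G x) (adjG G).

Definition op_s n (v : 'I_n) (G : lgraph n) : lgraph n :=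
  LGraph (loopG G)
    (fun x y => adjG G x y (+) [&& x != y, adjG G v x & adjG G v y]).

Definition op_ns n (v : 'I_n) (G : lgraph n) : lgraph n :=
  LGraph (fun x => loopG G x (+) adjG G v x)
    (fun x y => adjG G x y (+) [&& x != y, adjG G v x & adjG G v y]).

Inductive loc_equiv n (G : lgraph n) : lgraph n -> Prop :=
  | le_refl : loc_equiv G G
  | le_l v H : loc_equiv G H -> loc_equiv G (op_l v H)
  | le_s v H : loc_equiv G H -> loc_equiv G (op_s v H)
  | le_ns v H : loc_equiv G H -> loc_equiv G (op_ns v H).

Definition bipartite n (G : lgraph n) : Prop :=
  (forall v, ~~ loopG G v) /\
  exists c : 'I_n -> bool, forall x y, adjG G x y -> c x != c y.

Definition adjmx n (G : lgraph n) : 'M['F_2]_n :=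
  \matrix_(i, j) (if i == j then (loopG G i)%:R else (adjG G i j)%:R).

Definition IAS n (G : lgraph n) : 'M['F_2]_(n, n + (n + n)) :=
  row_mx 1%:M (row_mx (adjmx G) (adjmx G + 1%:M)).

(* W(G) = 'I_n * 'I_3 ; (v,0) = phi_G(v), (v,1) = chi_G(v), (v,2) = psi_G(v) *)
Definition Wcol n (w : 'I_n * 'I_3) : 'I_(n + (n + n)) :=
  let: (v, k) := w in
  if val k == 0%N then lshift (n + n) v
  else if val k == 1%N then rshift n (lshift n v)
  else rshift n (rshift n v).

Record matroid (E : finType) := Matroid { ground : {set E}; mrank : {set E} -> nat }.

(* binary column matroid M[IAS(G)] on W(G): rank = dimension of the span
   of the columns labelled by the elements of X *)
Definition MIAS n (G : lgraph n) : matroid ('I_n * 'I_3)%type :=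
  Matroid [set: 'I_n * 'I_3]
    (fun X => \rank (\sum_(w in X) <<row (Wcol w) (IAS G)^T>>)%MS).

Definition restrict E (M : matroid E) (T : {set E}) : matroid E :=
  Matroid T (mrank M).

Definition dual E (M : matroid E) : matroid E :=
  Matroid (ground M)
    (fun X => (#|X| + mrank M (ground M :\: X) - mrank M (ground M))%N).

(* direct sum of two matroids with disjoint ground sets in the same type *)
Definition dsum E (M N : matroid E) : matroid E :=
  Matroid (ground M :|: ground N)
    (fun X => (mrank M (X :&: ground M) + mrank N (X :&: ground N))%N).

Definition meq E (M N : matroid E) : Prop :=
  ground M = ground N /\
  forall X : {set E}, X \subset ground M -> mrank M X = mrank N X.

Definition miso E (M N : matroid E) : Prop :=
  exists f : E -> E,
    [/\ {in ground M &, injective f}, f @: ground M = ground N &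
        forall X : {set E}, X \subset ground M -> mrank N (f @: X) = mrank M X].

Definition transversalW n (T : {set 'I_n * 'I_3}) : Prop :=
  forall v : 'I_n, #|[set k | (v, k) \in T]| = 1%N.

(* Main.v *)
Require Import Defs.
From HB Require Import structures.
From mathcomp Require Import all_boot all_order all_algebra all_fingroup.
From mathcomp Require Import zify.
From Stdlib Require Import Lia.
Set Implicit Arguments. Unset Strict Implicit. Unset Printing Implicit Defensive.
Import GRing.Theory.

Section Aux.
Local Open Scope ring_scope.

Lemma F2_x (x : 'F_2) : x + x = 0. Proof. by case: x => [[|[|]]] // ?; apply/eqP. Qed.
Ltac fin2 := rewrite ?addr0 ?add0r ?mulr1 ?mul1r ?mulr0 ?mul0r ?F2_x //=; try by apply/eqP.

Lemma xorR (a b : bool) : ((a (+) b)%:R : 'F_2) = a%:R + b%:R.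
Proof. by case: a; case: b => //; apply/eqP. Qed.
Lemma andR (a b : bool) : ((a && b)%:R : 'F_2) = a%:R * b%:R.
Proof. by case: a; case: b => //=; rewrite ?mulr1 ?mulr0. Qed.

Lemma tpermE' (T : finType) (x y z : T) :
  tperm x y z = if z == x then y else if z == y then x else z.
Proof.
by rewrite permE.
Qed.

Definition i0 : 'I_3 := @Ordinal 3 0 isT.
Definition i1 : 'I_3 := @Ordinal 3 1 isT.
Definition i2 : 'I_3 := @Ordinal 3 2 isT.

Variable n : nat.
Implicit Types (G H : lgraph n).

Definition colv G (w : 'I_n * 'I_3) : 'rV['F_2]_n := \row_j IAS G j (Wcol w).
Definition SS G (X : {set 'I_n * 'I_3}) : 'M['F_2]_n := (\sum_(w in X) <<colv G w>>)%MS.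

Lemma mrankE G X : mrank (MIAS G) X = \rank (SS G X).
Proof.
rewrite /= /SS; congr (\rank _); apply: eq_bigr => w _; congr (<<_>>)%MS.
by apply/rowP => j; rewrite !mxE.
Qed.

Lemma colvE G u (k : 'I_3) j : colv G (u, k) 0 j =
  if val k == 0%N then (j == u)%:R else if val k == 1%N then adjmx G j u
  else adjmx G j u + (j == u)%:R.
Proof.
rewrite mxE /Wcol /IAS.
case: ifP => _; first by rewrite row_mxEl mxE.
case: ifP => _; first by rewrite row_mxEr row_mxEl.
by rewrite !row_mxEr !mxE.
Qed.

Lemma adjmxE G i j : adjmx G i j = if i == j then (loopG G i)%:R else (adjG G i j)%:R.
Proof. by rewrite mxE. Qed.

Definition sig (p : 'I_n -> {perm 'I_3}) (w : 'I_n * 'I_3) := (w.1, p w.1 w.2).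

Lemma sig_inj p : injective (sig p).
Proof. by move=> [u k] [u' k'] [/= <-] /perm_inj ->. Qed.

Lemma sigM p q w : sig (fun u => (p u * q u)%g) w = sig q (sig p w).
Proof. by rewrite /sig /= permM. Qed.

Definition stepP G H := exists q C, C \in unitmx /\
   forall w, colv H (sig q w) = colv G w *m C.

Definition Cmx (a : 'rV['F_2]_n) v : 'M['F_2]_n := 1%:M + (delta_mx v 0 : 'cV_n) *m a.

Lemma Cmx_entry (x a : 'rV['F_2]_n) v j :
  (x *m Cmx a v) 0 j = x 0 j + x 0 v * a 0 j.
Proof.
rewrite /Cmx mulmxDr mulmx1 mulmxA -colE mxE; congr (_ + _).
by rewrite !mxE big_ord1 !mxE.
Qed.

Lemma Cmx_unit (a : 'rV['F_2]_n) v : a 0 v = 0 -> Cmx a v \in unitmx.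
Proof.
move=> av; suff: Cmx a v *m Cmx a v = 1%:M by case/mulmx1_unit.
apply/row_matrixP => i; rewrite row_mul; apply/rowP => j.
rewrite Cmx_entry !mxE !big_ord1 !mxE av mulr0 addr0 eqxx /=.
by rewrite andbT -addrA -mulrDl F2_x mul0r addr0.
Qed.

Definition avec G v : 'rV['F_2]_n := \row_j (adjG G v j)%:R.


Lemma tpermv (x y z : 'I_3) : val (tperm x y z) =
  if val z == val x then val y else if val z == val y then val x else val z.
Proof. by rewrite tpermE' -[z == x]/(val z == val x) -[z == y]/(val z == val y); case: ifP => //; case: ifP. Qed.

Definition ql v (u : 'I_n) : {perm 'I_3} := if u == v then tperm i1 i2 else 1%g.

Lemma step_l G v w : colv (op_l v G) (sig (ql v) w) = colv G w *m 1%:M.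
Proof.
case: w => u k; rewrite mulmx1; apply/rowP=> j; rewrite !colvE !adjmxE /sig /ql /=.
case: (eqVneq u v) => [->|nuv]; rewrite ?eqxx ?(negbTE nuv) ?perm1 ?tpermv.
  case: k => [[|[|[|//]]] Hk] /=; case: (eqVneq j v) => [e|njv]; rewrite ?e;
  rewrite ?eqxx ?(negbTE njv) //; case: (loopG G v) => /=; fin2.
case: (eqVneq j u) => [e|nju]; rewrite ?e; rewrite ?eqxx ?(negbTE nju) ?(negbTE nuv) //.
Qed.

Definition qns G v (u : 'I_n) : {perm 'I_3} :=
  if u == v then (if loopG G v then tperm i0 i1 else tperm i0 i2) else 1%g.

Lemma step_ns G v w : simple_lgraph G ->
  colv (op_ns v G) (sig (qns G v) w) = colv G w *m Cmx (avec G v) v.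
Proof.
case: w => u k [sy ir]; apply/rowP=> j.
rewrite Cmx_entry !colvE !adjmxE /sig /qns /= mxE.
case: (eqVneq u v) => [e|nuv]; try subst u.
  rewrite ?eqxx ?(ir v) ?(sy j v).
  case: (eqVneq j v) => [e|njv]; rewrite ?e ?eqxx ?(ir v) ?(negbTE njv) /=;
  case: (loopG G v); rewrite tpermv; case: k => [[|[|[|//]]] Hk] /=;
  case: (adjG G v j); fin2.
have nvu : v != u by rewrite eq_sym.
rewrite ?(negbTE nuv) ?(negbTE nvu) perm1.
case: k => [[|[|[|//]]] Hk] /=;
case: (eqVneq j u) => [e|nju]; rewrite ?e; rewrite ?eqxx ?(negbTE nju) /=;
case: (adjG G v u); case: (adjG G v j); case: (adjG G j u); case: (loopG G u); fin2.
Qed.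

Definition qs G v (u : 'I_n) : {perm 'I_3} :=
  if u == v then (if loopG G v then tperm i0 i1 else tperm i0 i2)
  else if adjG G v u then tperm i1 i2 else 1%g.

Lemma step_s G v w : simple_lgraph G ->
  colv (op_s v G) (sig (qs G v) w) = colv G w *m Cmx (avec G v) v.
Proof.
case: w => u k [sy ir]; apply/rowP=> j.
rewrite Cmx_entry !colvE !adjmxE /sig /qs /= mxE.
case: (eqVneq u v) => [e|nuv]; try subst u.
  rewrite ?eqxx ?(ir v) ?(sy j v).
  case: (eqVneq j v) => [e|njv]; rewrite ?e ?eqxx ?(ir v) ?(negbTE njv) /=;
  case: (loopG G v); rewrite tpermv; case: k => [[|[|[|//]]] Hk] /=;
  case: (adjG G v j); fin2.
have nvu : v != u by rewrite eq_sym.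
rewrite ?(negbTE nuv) ?(negbTE nvu).
case: (eqVneq j u) => [e|nju]; rewrite ?e ?eqxx ?(negbTE nju) /=;
case: (adjG G v u); rewrite ?tpermv ?perm1;
case: k => [[|[|[|//]]] Hk] /=;
case: (adjG G v j); case: (adjG G j u); case: (loopG G u); fin2.
Qed.

Lemma op_l_simple G v : simple_lgraph G -> simple_lgraph (op_l v G).
Proof. by []. Qed.

Lemma op_ns_simple G v : simple_lgraph G -> simple_lgraph (op_ns v G).
Proof.
move=> [sy ir]; split => [x y|x] /=; last by rewrite ir eqxx.
by rewrite sy eq_sym [adjG G v x && _]andbC.
Qed.

Lemma op_s_simple G v : simple_lgraph G -> simple_lgraph (op_s v G).
Proof.
move=> [sy ir]; split => [x y|x] /=; last by rewrite ir eqxx.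
by rewrite sy eq_sym [adjG G v x && _]andbC.
Qed.

Lemma avec_v G v : simple_lgraph G -> avec G v 0 v = 0.
Proof. by move=> [_ ir]; rewrite mxE ir. Qed.

Definition relP G H := exists p B, B \in unitmx /\
  forall w, colv H (sig p w) = colv G w *m B.

Lemma relP_refl G : relP G G.
Proof.
exists (fun _ => 1%g), 1%:M; split; first exact: unitmx1.
by move=> [u k]; rewrite mulmx1 /sig /= perm1.
Qed.

Lemma relP_trans G H K : relP G H -> relP H K -> relP G K.
Proof.
move=> [p [B [uB hB]]] [q [C [uC hC]]].
exists (fun u => (p u * q u)%g), (B *m C); split; first by rewrite unitmx_mul uB.
by move=> w; rewrite sigM hC hB mulmxA.
Qed.

Lemma transfer G H : simple_lgraph G -> loc_equiv G H ->
  simple_lgraph H /\ relP G H.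
Proof.
move=> sG; elim=> [|v H' _ [sH rH]|v H' _ [sH rH]|v H' _ [sH rH]].
- by split; last exact: relP_refl.
- split; first exact: op_l_simple.
  apply: relP_trans rH _; exists (ql v), 1%:M; split; first exact: unitmx1.
  by move=> w; apply: step_l.
- split; first exact: op_s_simple.
  apply: relP_trans rH _; exists (qs H' v), (Cmx (avec H' v) v); split.
    by apply: Cmx_unit; apply: avec_v.
  by move=> w; apply: step_s.
- split; first exact: op_ns_simple.
  apply: relP_trans rH _; exists (qns H' v), (Cmx (avec H' v) v); split.
    by apply: Cmx_unit; apply: avec_v.
  by move=> w; apply: step_ns.
Qed.

Lemma rank_transfer G H p B (X : {set 'I_n * 'I_3}) : B \in unitmx ->
  (forall w, colv H (sig p w) = colv G w *m B) ->
  \rank (SS H (sig p @: X)) = \rank (SS G X).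
Proof.
move=> uB hB; rewrite /SS big_imset /=; last by move=> x y _ _ /sig_inj.
have e : ((\sum_(w in X) <<colv H (sig p w)>>)%MS :=:
          (\sum_(w in X) <<colv G w>>)%MS *m B)%MS.
  apply: eqmx_trans (eqmx_sym (sumsmxMr _ _ _)).
  apply: eqmx_sums => w _; rewrite hB.
  apply: eqmx_trans (genmxE _) _; apply: eqmx_sym; apply: eqmxMr; exact: genmxE.
by rewrite (e).1 mxrankMfree // row_free_unit.
Qed.

Definition Tf (t : 'I_n -> 'I_3) : {set 'I_n * 'I_3} := [set w | w.2 == t w.1].

Lemma transW_Tf (T : {set 'I_n * 'I_3}) : transversalW T -> exists t, T = Tf t.
Proof.
move=> hT; exists (fun v => odflt i0 [pick k | (v, k) \in T]).
apply/setP => [[v k]]; rewrite inE /=.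
have /eqP/cards1P [k0 e] := hT v.
have hk : forall k', ((v, k') \in T) = (k' == k0).
  by move=> k'; rewrite -in_set1 -e inE.
case: pickP => [k' /= | /(_ k0)]; last by rewrite hk eqxx.
by rewrite !hk => /eqP ->.
Qed.

Lemma Tf_trans t : transversalW (Tf t).
Proof.
move=> v; apply/eqP/cards1P; exists (t v); apply/setP => k.
by rewrite !inE.
Qed.

Lemma card_Tf t : #|Tf t| = n.
Proof.
have -> : Tf t = [set (v, t v) | v in [set: 'I_n]].
  apply/setP => [[v k]]; rewrite inE /=; apply/eqP/imsetP => [->|[u _ [-> ->]]] //.
  by exists v; rewrite ?inE.
by rewrite card_imset ?cardsT ?card_ord // => u u' [].
Qed.

Lemma Tf_disj t1 t2 : (forall v, t1 v != t2 v) -> [disjoint Tf t1 & Tf t2].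
Proof.
move=> d; rewrite -setI_eq0; apply/eqP/setP => [[v k]]; rewrite !inE /=.
by apply/negP => /andP [/eqP -> /eqP e]; move: (d v); rewrite e eqxx.
Qed.

Lemma disj_Tf t1 t2 : [disjoint Tf t1 & Tf t2] -> forall v, t1 v != t2 v.
Proof.
move=> d v; apply/negP => /eqP e.
have h : (v, t1 v) \in Tf t1 by rewrite inE.
by have := disjointFr d h; rewrite inE /= e eqxx.
Qed.

Lemma sig_Tf p t : sig p @: Tf t = Tf (fun v => p v (t v)).
Proof.
apply/setP => [[v k]]; rewrite inE /=; apply/imsetP/eqP => [[[u j]]|->].
  by rewrite inE /= /sig => /eqP -> [-> ->].
by exists (v, t v); rewrite ?inE.
Qed.

Lemma SS_sub G (X Y : {set 'I_n * 'I_3}) : X \subset Y -> (SS G X <= SS G Y)%MS.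
Proof.
move=> sXY; apply/sumsmx_subP => w wX; apply: (sumsmx_sup w); last exact: submx_refl.
exact: (subsetP sXY).
Qed.

Lemma colv_SS G (X : {set 'I_n * 'I_3}) w : w \in X -> (colv G w <= SS G X)%MS.
Proof. by move=> wX; apply: (sumsmx_sup w) => //; rewrite genmxE. Qed.

Lemma e_sub G i (k1 k2 : 'I_3) (S : 'M['F_2]_n) : k1 != k2 ->
  (colv G (i, k1) <= S)%MS -> (colv G (i, k2) <= S)%MS -> (colv G (i, i0) <= S)%MS.
Proof.
case: k1 => [[|[|[|//]]] H1]; case: k2 => [[|[|[|//]]] H2] //= _ s1 s2;
  try (by have -> : i0 = Ordinal H1 by apply: val_inj);
  try (by have -> : i0 = Ordinal H2 by apply: val_inj);
  (have -> : colv G (i, i0) = colv G (i, Ordinal H1) + colv G (i, Ordinal H2)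
     by apply/rowP => j; rewrite [RHS]mxE !colvE /=;
        rewrite ?addrA ?F2_x ?add0r // addrC addrA F2_x add0r);
  exact: addmx_sub.
Qed.

Lemma SS_full G t1 t2 : (forall v, t1 v != t2 v) ->
  \rank (SS G (Tf t1) + SS G (Tf t2))%MS = n.
Proof.
move=> d; apply/eqP; rewrite eqn_leq rank_leq_col /=.
rewrite -{1}(mxrank1 'F_2 n); apply: mxrankS; apply/row_subP => i.
have -> : row i (1%:M : 'M['F_2]_n) = colv G (i, i0).
  by apply/rowP => j; rewrite colvE !mxE /= eq_sym.
apply: (e_sub (d i)).
  by apply: submx_trans (addsmxSl _ _); apply: colv_SS; rewrite inE.
by apply: submx_trans (addsmxSr _ _); apply: colv_SS; rewrite inE.
Qed.

Lemma sum_cap G t1 t2 : (forall v, t1 v != t2 v) ->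
  (\rank (SS G (Tf t1)) + \rank (SS G (Tf t2)) =
   n + \rank (SS G (Tf t1) :&: SS G (Tf t2)))%N.
Proof. by move=> d; rewrite -mxrank_sum_cap SS_full. Qed.

Definition reach G H p B := [/\ loc_equiv G H, simple_lgraph H, B \in unitmx &
  forall w, colv H (sig p w) = colv G w *m B].

Lemma reach_refl G : simple_lgraph G -> reach G G (fun _ => 1%g) 1%:M.
Proof.
move=> sG; split => //; [exact: le_refl | exact: unitmx1 |].
by move=> [u k]; rewrite mulmx1 /sig /= perm1.
Qed.

Lemma reach_l G H p B v : reach G H p B ->
  reach G (op_l v H) (fun u => (p u * ql v u)%g) (B *m 1%:M).
Proof.
move=> [lH sH uB hB]; split; [exact: le_l | exact: op_l_simple | |].
  by rewrite mulmx1.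
by move=> w; rewrite sigM step_l hB mulmxA.
Qed.

Lemma reach_ns G H p B v : reach G H p B ->
  reach G (op_ns v H) (fun u => (p u * qns H v u)%g) (B *m Cmx (avec H v) v).
Proof.
move=> [lH sH uB hB]; split; [exact: le_ns | exact: op_ns_simple | |].
  by rewrite unitmx_mul uB Cmx_unit // avec_v.
by move=> w; rewrite sigM step_ns // hB mulmxA.
Qed.

Lemma norm_step G t H p B v0 : reach G H p B ->
  exists H' p' B', [/\ reach G H' p' B', p' v0 (t v0) = i2 &
                       forall u, u != v0 -> p' u = p u].
Proof.
move=> r.
have Hl : forall H p B, reach G H p B -> forall u, u != v0 ->
   (p u * ql v0 u)%g = p u.
  by move=> ? ? ? _ u nu; rewrite /ql (negbTE nu) mulg1.
have Hns : forall H p B, reach G H p B -> forall u, u != v0 ->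
   (p u * qns H v0 u)%g = p u.
  by move=> ? ? ? _ u nu; rewrite /qns (negbTE nu) mulg1.
case ek: (p v0 (t v0)) => [[|[|[|//]]] Hk].
- have [lp|lp] := boolP (loopG H v0).
  + have r1 := reach_l v0 r.
    have r2 := reach_ns v0 r1.
    do 3 eexists; split; first exact: r2.
      by apply: val_inj; rewrite !permM /qns /ql !eqxx /= eqxx lp /= !tpermv ek.
    by move=> u nu /=; rewrite (Hns _ _ _ r1 u nu) (Hl _ _ _ r u nu).
  + have r1 := reach_ns v0 r.
    do 3 eexists; split; first exact: r1.
      by apply: val_inj; rewrite !permM /qns eqxx (negbTE lp) tpermv ek.
    by move=> u nu /=; rewrite (Hns _ _ _ r u nu).
- have r1 := reach_l v0 r.
  do 3 eexists; split; first exact: r1.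
    by apply: val_inj; rewrite !permM /ql eqxx tpermv ek.
  by move=> u nu /=; rewrite (Hl _ _ _ r u nu).
- do 3 eexists; split; first exact: r.
    by rewrite ek; apply: val_inj.
  by [].
Qed.

Lemma normalize G (t : 'I_n -> 'I_3) : simple_lgraph G ->
  exists H p B, reach G H p B /\ forall v, p v (t v) = i2.
Proof.
move=> sG.
suff : forall m, exists H p B, reach G H p B /\ forall v : 'I_n, (v < m)%N -> p v (t v) = i2.
  by move=> /(_ n) [H [p [B [r h]]]]; exists H, p, B; split => // v; apply: h.
elim=> [|m [H [p [B [r h]]]]].
  by exists G, (fun _ => 1%g), 1%:M; split => //; apply: reach_refl.
case: (ltnP m n) => [lmn|lnm]; last first.
  exists H, p, B; split => // v _; apply: h; exact: leq_trans (ltn_ord v) lnm.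
have [H' [p' [B' [r' e1 e2]]]] := norm_step t (Ordinal lmn) r.
exists H', p', B'; split => // v; rewrite ltnS leq_eqVlt.
case: (eqVneq v (Ordinal lmn)) => [->|nv] //= lv.
rewrite e2 // h //; move: lv nv; case/orP => // /eqP ev.
by rewrite -(inj_eq val_inj) /= ev eqxx.
Qed.

Lemma sum_delta (g : 'I_n -> 'F_2) i : \sum_v (i == v)%:R * g v = g i.
Proof.
rewrite (bigD1 i) //= eqxx mul1r big1 ?addr0 // => v nv.
by rewrite eq_sym (negbTE nv) mul0r.
Qed.

Lemma scale_entry (a : 'F_2) (x : 'rV['F_2]_n) j : (a *: x) 0 j = a * x 0 j.
Proof. by rewrite mxE. Qed.

Lemma trmul_entry (x y : 'rV['F_2]_n) i j : (x^T *m y) i j = x 0 i * y 0 j.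
Proof. by rewrite !mxE big_ord1 !mxE. Qed.

Lemma colv1_exp G v : colv G (v, i1) = \sum_u adjmx G u v *: colv G (u, i0).
Proof.
apply/rowP => j; transitivity (adjmx G j v); first by rewrite colvE.
rewrite summxE -(sum_delta (fun u => adjmx G u v)); apply: eq_bigr => u _.
by rewrite scale_entry colvE /= mulrC.
Qed.

Lemma z_both G v (P : pred 'I_n) (Sa Sb : 'M['F_2]_n) :
  (forall u, P u -> (colv G (u, i0) <= Sa)%MS) ->
  (forall u, ~~ P u -> (colv G (u, i0) <= Sb)%MS) ->
  (colv G (v, i1) <= Sb)%MS ->
  ((\sum_(u | P u) adjmx G u v *: colv G (u, i0))%R <= Sa)%MS /\
  ((\sum_(u | P u) adjmx G u v *: colv G (u, i0))%R <= Sb)%MS.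
Proof.
move=> ha hb hv; split.
  by apply: summx_sub => u Pu; apply: scalemx_sub; apply: ha.
have e := colv1_exp G v; rewrite (bigID P) /= in e.
have -> : \sum_(u | P u) adjmx G u v *: colv G (u, i0) =
    colv G (v, i1) - \sum_(u | ~~ P u) adjmx G u v *: colv G (u, i0).
  by rewrite e addrK.
apply: addmx_sub => //; rewrite eqmx_opp.
by apply: summx_sub => u Pu; apply: scalemx_sub; apply: hb.
Qed.

Definition sides (s1 s2 : 'I_n -> 'I_3) := forall v,
  (val (s1 v) = 0%N /\ val (s2 v) = 1%N) \/ (val (s1 v) = 1%N /\ val (s2 v) = 0%N).

Lemma colv_eq G u (k k' : 'I_3) : val k = val k' -> colv G (u, k) = colv G (u, k').
Proof. by move=> /val_inj ->. Qed.

Lemma bip_zero G s1 s2 : sides s1 s2 ->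
  (SS G (Tf s1) :&: SS G (Tf s2) = 0)%MS ->
  forall u v, val (s1 u) = val (s1 v) -> adjmx G u v = 0.
Proof.
move=> sd cap0 u v euv.
pose P := fun w => val (s1 w) == val (s1 v).
pose z := \sum_(w | P w) adjmx G w v *: colv G (w, i0).
have m1 : forall w, val (s1 w) = 0%N -> (colv G (w, i0) <= SS G (Tf s1))%MS.
  by move=> w e; rewrite (@colv_eq _ _ i0 (s1 w)) // colv_SS // inE.
have m2 : forall w, val (s2 w) = 0%N -> (colv G (w, i0) <= SS G (Tf s2))%MS.
  by move=> w e; rewrite (@colv_eq _ _ i0 (s2 w)) // colv_SS // inE.
have n1 : forall w, val (s1 w) = 1%N -> (colv G (w, i1) <= SS G (Tf s1))%MS.
  by move=> w e; rewrite (@colv_eq _ _ i1 (s1 w)) // colv_SS // inE.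
have n2 : forall w, val (s2 w) = 1%N -> (colv G (w, i1) <= SS G (Tf s2))%MS.
  by move=> w e; rewrite (@colv_eq _ _ i1 (s2 w)) // colv_SS // inE.
have zb : (z <= SS G (Tf s1))%MS /\ (z <= SS G (Tf s2))%MS.
  case: (sd v) => [[e1 e2]|[e1 e2]].
    have [] := @z_both G v P (SS G (Tf s1)) (SS G (Tf s2)) => //.
    - by move=> w; rewrite /P e1 => /eqP; apply: m1.
    - move=> w; rewrite /P e1 => nw; apply: m2.
      by case: (sd w) => [[a b]|[a b]] //; rewrite a in nw.
    - by apply: n2.
  have [] := @z_both G v P (SS G (Tf s2)) (SS G (Tf s1)) => //.
  - move=> w; rewrite /P e1 => /eqP ew; apply: m2.
    by case: (sd w) => [[a b]|[a b]] //; rewrite a in ew.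
  - move=> w; rewrite /P e1 => nw; apply: m1.
    by case: (sd w) => [[a b]|[a b]] //; rewrite a in nw.
  - by apply: n1.
have : (z <= SS G (Tf s1) :&: SS G (Tf s2))%MS by rewrite sub_capmx; case: zb => -> ->.
rewrite cap0 submx0 => /eqP /rowP /(_ u); rewrite summxE [RHS]mxE.
rewrite (bigD1 u) /=; last by rewrite /P euv.
rewrite big1 ?addr0; first by rewrite scale_entry colvE /= eqxx mulr1.
by move=> w /andP [_ nw]; rewrite scale_entry colvE /= eq_sym (negbTE nw) mulr0.
Qed.

Lemma bip_of G s1 s2 : simple_lgraph G -> sides s1 s2 ->
  (SS G (Tf s1) :&: SS G (Tf s2) = 0)%MS -> bipartite G.
Proof.
move=> [sy ir] sd cap0; have z := bip_zero sd cap0.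
split.
  move=> v; have := z v v erefl; rewrite adjmxE eqxx.
  by case: (loopG G v) => // /eqP.
exists (fun v => val (s1 v) == 0%N) => x y axy.
apply/negP => /eqP exy.
have e : val (s1 x) = val (s1 y).
  by case: (sd x) => [[a _]|[a _]]; case: (sd y) => [[b _]|[b _]];
     move: exy; rewrite a b.
have := z x y e; rewrite adjmxE.
case: (eqVneq x y) => [exy'|nxy]; first by move: axy; rewrite exy' ir.
by rewrite axy => /eqP.
Qed.

Definition orth G (t1 t2 : 'I_n -> 'I_3) :=
  \sum_v (colv G (v, t1 v))^T *m colv G (v, t2 v) = 0.

Lemma adjmx_sym G i j : simple_lgraph G -> adjmx G i j = adjmx G j i.
Proof.
move=> [sy _]; rewrite !adjmxE eq_sym sy.
by case: (eqVneq j i) => [->|].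
Qed.

Lemma orth_H G s1 s2 : simple_lgraph G -> sides s1 s2 ->
  (forall u v, val (s1 u) = val (s1 v) -> adjmx G u v = 0) -> orth G s1 s2.
Proof.
move=> sG sd z; apply/matrixP => i j; rewrite summxE [RHS]mxE.
pose g1 v := if val (s1 v) == 0%N then adjmx G j v else 0.
pose g2 v := if val (s1 v) == 0%N then 0 else adjmx G i v.
transitivity (\sum_v ((i == v)%:R * g1 v + (j == v)%:R * g2 v)).
  apply: eq_bigr => v _; rewrite trmul_entry !colvE /g1 /g2.
  case: (sd v) => [[-> ->]|[-> ->]] /=; rewrite ?mulr0 ?addr0 ?add0r //.
  by rewrite mulrC.
rewrite big_split /= !sum_delta /g1 /g2.
case: (sd i) => [[a _]|[a _]]; case: (sd j) => [[b _]|[b _]]; rewrite a b /=;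
  rewrite ?addr0 ?add0r.
- by apply: z; rewrite a b.
- by rewrite (adjmx_sym j i sG) F2_x.
- by [].
- by apply: z; rewrite a b.
Qed.

Definition Dm (Z : {set 'I_n}) : 'M['F_2]_n := \matrix_(i, j) ((i == j) && (i \in Z))%:R.

Definition Um (u : 'I_n -> 'rV['F_2]_n) : 'M['F_2]_n := \matrix_(v, j) u v 0 j.

Lemma row_DU (u : 'I_n -> 'rV['F_2]_n) (Z : {set 'I_n}) v :
  row v (Dm Z *m Um u) = (v \in Z)%:R *: u v.
Proof.
apply/rowP => j; rewrite !mxE.
rewrite (bigD1 v) //= big1 ?addr0; first by rewrite !mxE eqxx.
by move=> k nk; rewrite !mxE eq_sym (negbTE nk) mul0r.
Qed.

Lemma spanE (u : 'I_n -> 'rV['F_2]_n) (Z : {set 'I_n}) :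
  ((\sum_(v in Z) <<u v>>)%MS :=: Dm Z *m Um u)%MS.
Proof.
apply/eqmxP/andP; split.
  apply/sumsmx_subP => v vZ; rewrite genmxE.
  have -> : u v = row v (Dm Z *m Um u) by rewrite row_DU vZ scale1r.
  exact: row_sub.
apply/row_subP => v; rewrite row_DU; case: (boolP (v \in Z)) => vZ.
  by rewrite scale1r; apply: (sumsmx_sup v) => //; rewrite genmxE.
by rewrite scale0r sub0mx.
Qed.

Lemma rank_Dm (Z : {set 'I_n}) : \rank (Dm Z) = #|Z|.
Proof.
have e := spanE (fun v => delta_mx 0 v) Z.
rewrite (_ : Um _ = 1%:M) ?mulmx1 in e; last by apply/matrixP => i j; rewrite !mxE eq_sym.
rewrite -(e).1.
move/mxdirectP: (@mxdirect_delta 'F_2 _ (mem Z) n id (in2W (@inj_id _))) => /= ->.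
rewrite -sum1_card; apply: eq_bigr => i _.
by rewrite mxrank_gen mxrank_delta.
Qed.

Lemma Dm_tr (Z : {set 'I_n}) : (Dm Z)^T = Dm Z.
Proof. by apply/matrixP => i j; rewrite !mxE eq_sym; case: eqP => // ->. Qed.

Lemma Dm_compl (Z : {set 'I_n}) : Dm Z *m Dm (~: Z) = 0.
Proof.
apply/matrixP => i j; rewrite !mxE big1 // => k _; rewrite !mxE inE.
case: (eqVneq i k) => [->|_] /=; last by rewrite mul0r.
by case: (k \in Z); case: (k == j); rewrite /= ?mul0r ?mulr0.
Qed.

Lemma DmT : Dm [set: 'I_n] = 1%:M.
Proof. by apply/matrixP => i j; rewrite !mxE inE andbT. Qed.

Lemma ker_Dm (Z : {set 'I_n}) : (kermx (Dm (~: Z)) :=: Dm Z)%MS.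
Proof.
apply: eqmx_sym; apply/eqmxP.
have s : (Dm Z <= kermx (Dm (~: Z)))%MS by apply/sub_kermxP; apply: Dm_compl.
rewrite -(mxrank_leqif_eq s).2 mxrank_ker !rank_Dm.
have := cardsC Z; rewrite card_ord => e.
apply/eqP; lia.
Qed.

Lemma duality_core (U W : 'M['F_2]_n) (Z : {set 'I_n}) :
  (\rank U + \rank W = n)%N -> U^T *m W = 0 ->
  (\rank (Dm Z *m U) + \rank W = #|Z| + \rank (Dm (~: Z) *m W))%N.
Proof.
move=> rk orth.
have hk : (kermx U :=: W^T)%MS.
  apply: eqmx_sym; apply/eqmxP.
  have s : (W^T <= kermx U)%MS by apply/sub_kermxP; rewrite -[U]trmxK -trmx_mul orth trmx0.
  by rewrite -(mxrank_leqif_eq s).2 mxrank_ker mxrank_tr; apply/eqP; lia.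
have a := mxrank_mul_ker (Dm Z) U.
have b := mxrank_mul_ker W^T (Dm (~: Z)).
rewrite rank_Dm (cap_eqmx (eqmx_refl _) hk) in a.
rewrite (cap_eqmx (eqmx_refl _) (ker_Dm Z)) capmxC mxrank_tr in b.
rewrite -(mxrank_tr (W^T *m _)) trmx_mul Dm_tr trmxK in b.
rewrite -b -a addnA -!addnA; congr (_ + _)%N; exact: addnC.
Qed.

Definition good G (t1 t2 : 'I_n -> 'I_3) :=
  (forall v, t1 v != t2 v) /\ (SS G (Tf t1) :&: SS G (Tf t2) = 0)%MS.

Lemma good_rank G t1 t2 : (forall v, t1 v != t2 v) ->
  (\rank (SS G (Tf t1)) + \rank (SS G (Tf t2)) = n)%N ->
  good G t1 t2.
Proof.
move=> d rk; split => //; apply/eqP; rewrite -mxrank_eq0.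
by move: (sum_cap G d); rewrite rk => /eqP; rewrite -{1}[n]addn0 eqn_add2l eq_sym.
Qed.

Lemma good_rank' G t1 t2 : good G t1 t2 ->
  (\rank (SS G (Tf t1)) + \rank (SS G (Tf t2)) = n)%N.
Proof. by move=> [d c]; rewrite sum_cap // c mxrank0 addn0. Qed.

Lemma DmE (x : 'rV['F_2]_n) Y j : (x *m Dm Y) 0 j = x 0 j * (j \in Y)%:R.
Proof.
rewrite mxE (bigD1 j) //= big1 ?addr0; first by rewrite mxE eqxx.
by move=> k nk; rewrite mxE (negbTE nk) mulr0.
Qed.

Lemma bip_good G H : simple_lgraph G -> loc_equiv G H -> bipartite H ->
  exists t1 t2, good G t1 t2.
Proof.
move=> sG lH [nl [c hc]].
have [sH [p [B [uB hB]]]] := transfer sG lH.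
have [syH irH] := sH.
pose s1 v := if c v then i0 else i1.
pose s2 v := if c v then i1 else i0.
pose Y := [set v | c v].
have z1 : forall j v, c j = c v -> adjmx H j v = 0.
  move=> j v e; rewrite adjmxE; case: (eqVneq j v) => [->|njv].
    by rewrite (negbTE (nl v)).
  by case a: (adjG H j v) => //; move: (hc _ _ a); rewrite e eqxx.
have k1 : (SS H (Tf s1) <= kermx (Dm (~: Y)))%MS.
  apply/sumsmx_subP => [[v k]]; rewrite inE /= genmxE => /eqP ->.
  apply/sub_kermxP; apply/rowP => j; rewrite DmE colvE !inE [RHS]mxE /s1.
  case cv: (c v) => /=.
    by case: (eqVneq j v) => [->|]; rewrite ?cv ?mul1r ?mul0r.
  by case cj: (c j); rewrite /= ?mulr0 // z1 ?mul0r // cj cv.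
have k2 : (SS H (Tf s2) <= kermx (Dm Y))%MS.
  apply/sumsmx_subP => [[v k]]; rewrite inE /= genmxE => /eqP ->.
  apply/sub_kermxP; apply/rowP => j; rewrite DmE colvE !inE [RHS]mxE /s2.
  case cv: (c v) => /=.
    by case cj: (c j); rewrite /= ?mulr0 // z1 ?mul0r // cj cv.
  by case: (eqVneq j v) => [->|]; rewrite ?cv ?mul1r ?mul0r.
have capH : (SS H (Tf s1) :&: SS H (Tf s2) = 0)%MS.
  set K := (SS H (Tf s1) :&: SS H (Tf s2))%MS.
  have a : K *m Dm (~: Y) = 0.
    by apply/sub_kermxP; apply: submx_trans k1; apply: capmxSl.
  have b : K *m Dm Y = 0.
    by apply/sub_kermxP; apply: submx_trans k2; apply: capmxSr.
  have e : Dm Y + Dm (~: Y) = 1%:M.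
    apply/matrixP => i j; rewrite !mxE !inE.
    by case: (i == j); case: (c i); rewrite /= ?addr0 ?add0r.
  by rewrite -[K]mulmx1 -e mulmxDr a b addr0.
have dH : forall v, s1 v != s2 v by move=> v; rewrite /s1 /s2; case: (c v).
exists (fun v => (p v)^-1%g (s1 v)), (fun v => (p v)^-1%g (s2 v)).
apply: good_rank.
  by move=> v; rewrite (inj_eq perm_inj) dH.
have ef : forall s, sig p @: Tf (fun v => (p v)^-1%g (s v)) = Tf s.
  by move=> s; rewrite sig_Tf; apply/setP => w; rewrite !inE permKV.
rewrite -!(rank_transfer _ uB hB) !ef.
by move: (sum_cap H dH); rewrite capH mxrank0 addn0.
Qed.

Definition third (a b : 'I_3) : 'I_3 :=
  if (val a != 0%N) && (val b != 0%N) then i0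
  else if (val a != 1%N) && (val b != 1%N) then i1 else i2.

Lemma third_neq (a b : 'I_3) : a != b -> third a b != a /\ third a b != b.
Proof.
by case: a => [[|[|[|//]]] Ha]; case: b => [[|[|[|//]]] Hb].
Qed.

Lemma sides_of (a b : 'I_3) : a != i2 -> b != i2 -> a != b ->
  (val a = 0%N /\ val b = 1%N) \/ (val a = 1%N /\ val b = 0%N).
Proof.
by case: a => [[|[|[|//]]] Ha]; case: b => [[|[|[|//]]] Hb]; auto.
Qed.

Lemma orth_transfer G H p B t1 t2 : B \in unitmx ->
  (forall w, colv H (sig p w) = colv G w *m B) ->
  orth H (fun v => p v (t1 v)) (fun v => p v (t2 v)) -> orth G t1 t2.
Proof.
move=> uB hB; rewrite /orth.
have e : forall v, colv H (v, p v (t1 v)) = colv G (v, t1 v) *m B /\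
                   colv H (v, p v (t2 v)) = colv G (v, t2 v) *m B.
  by move=> v; rewrite -!hB.
have e2 : forall x y : 'rV['F_2]_n, (x *m B)^T *m (y *m B) = B^T *m (x^T *m y) *m B.
  by move=> x y; rewrite trmx_mul !mulmxA.
under eq_bigr do rewrite (e _).1 (e _).2 e2.
rewrite -mulmx_suml -mulmx_sumr => h.
have uBt : B^T \in unitmx by rewrite unitmx_tr.
set X := \sum_i _ in h *.
by rewrite -[X](mulKmx uBt) -[B^T *m X](mulmxK uB) h mul0mx mulmx0.
Qed.

Lemma good_bip G t1 t2 : simple_lgraph G -> good G t1 t2 ->
  (exists H, loc_equiv G H /\ bipartite H) /\ orth G t1 t2.
Proof.
move=> sG [d cap0].
have [H [p [B [[lH sH uB hB] hp]]]] := normalize (fun v => third (t1 v) (t2 v)) sG.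
pose s1 v := p v (t1 v). pose s2 v := p v (t2 v).
have sd : sides s1 s2.
  move=> v; have [n1 n2] := third_neq (d v).
  apply: sides_of.
  - by rewrite /s1 -(hp v) (inj_eq perm_inj) eq_sym.
  - by rewrite /s2 -(hp v) (inj_eq perm_inj) eq_sym.
  - by rewrite /s1 /s2 (inj_eq perm_inj) d.
have d' : forall v, s1 v != s2 v by move=> v; rewrite /s1 /s2 (inj_eq perm_inj).
have capH : (SS H (Tf s1) :&: SS H (Tf s2) = 0)%MS.
  have g : good H s1 s2.
    apply: good_rank => //.
    rewrite -!sig_Tf !(rank_transfer _ uB hB).
    by apply: good_rank'.
  by case: g.
split; first by exists H; split => //; apply: (bip_of sH sd capH).
apply: (orth_transfer uB hB).
apply: orth_H => //; exact: bip_zero sd capH.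
Qed.

Definition imgT (t : 'I_n -> 'I_3) (Z : {set 'I_n}) : {set 'I_n * 'I_3} :=
  [set (v, t v) | v in Z].

Lemma imgT_inj (t : 'I_n -> 'I_3) : injective (fun v : 'I_n => (v, t v)).
Proof. by move=> u v []. Qed.

Lemma sub_Tf_img t (X : {set 'I_n * 'I_3}) : X \subset Tf t ->
  X = imgT t [set v | (v, t v) \in X].
Proof.
move=> sX; apply/setP => [[v k]]; apply/idP/imsetP => [wX|[u]].
  have := subsetP sX _ wX; rewrite inE /= => /eqP ek.
  by exists v; rewrite ?inE -?ek.
by rewrite inE => uX [-> ->].
Qed.

Lemma card_imgT (t : 'I_n -> 'I_3) (Z : {set 'I_n}) : #|imgT t Z| = #|Z|.
Proof. by rewrite card_imset //; apply: imgT_inj. Qed.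

Lemma rank_imgT G (t : 'I_n -> 'I_3) (Z : {set 'I_n}) : \rank (SS G (imgT t Z)) =
  \rank (Dm Z *m Um (fun v => colv G (v, t v))).
Proof.
rewrite /SS big_imset /=; last by move=> x y _ _; apply: imgT_inj.
exact: (spanE _ Z).1.
Qed.


Lemma Tf_imgT t : Tf t = imgT t [set: 'I_n].
Proof.
apply/setP => [[v k]]; rewrite inE /=; apply/eqP/imsetP => [->|[u _ [-> ->]]] //.
by exists v; rewrite ?inE.
Qed.

Lemma diff_img (t : 'I_n -> 'I_3) (Z : {set 'I_n}) : imgT t [set: 'I_n] :\: imgT t Z = imgT t (~: Z).
Proof.
apply/setP => w; rewrite inE; apply/andP/imsetP => [[nZ /imsetP [v _ ew]]|[v vZ ->]].
  subst w; exists v => //; rewrite inE; apply: contra nZ => vZ; by apply/imsetP; exists v.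
split; last by apply/imsetP; exists v; rewrite ?inE.
apply/imsetP => [[u uZ [e _]]]; move: vZ; rewrite inE e uZ.
by [].
Qed.

Lemma orth_UW G t1 t2 : orth G t1 t2 ->
  (Um (fun v => colv G (v, t1 v)))^T *m Um (fun v => colv G (v, t2 v)) = 0.
Proof.
rewrite /orth => h; apply/matrixP => i j.
have := congr1 (fun M : 'M['F_2]_n => M i j) h.
rewrite /= summxE [X in _ = X -> _]mxE => e; rewrite [RHS]mxE -e [LHS]mxE.
apply: eq_bigr => v _.
by rewrite trmul_entry !mxE.
Qed.

Lemma mrank_dualE G (T Y : {set 'I_n * 'I_3}) :
  mrank (dual (restrict (MIAS G) T)) Y =
  (#|Y| + \rank (SS G (T :\: Y)) - \rank (SS G T))%N.
Proof. by rewrite /= -!mrankE. Qed.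

Lemma good_dual G t1 t2 : good G t1 t2 -> orth G t1 t2 ->
  miso (restrict (MIAS G) (Tf t1)) (dual (restrict (MIAS G) (Tf t2))).
Proof.
move=> g o; exists (fun w => (w.1, t2 w.1)); split.
- move=> [u k] [u' k'] /=; rewrite !inE /= => /eqP -> /eqP -> [e].
  by rewrite e.
- apply/setP => [[v k]] /=; rewrite inE /=; apply/imsetP/eqP => [[[u j] _ [-> ->]]|->] //.
  by exists (v, t1 v); rewrite ?inE.
move=> X sX; rewrite mrank_dualE -/(mrank (MIAS G) X) mrankE.
set Z := [set v | (v, t1 v) \in X].
have eX := sub_Tf_img sX; rewrite -/Z in eX.
have ef : [set (w.1, t2 w.1) | w in X] = imgT t2 Z.
  rewrite eX /imgT -imset_comp; apply: eq_imset => v //.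
have rk := good_rank' g.
rewrite !Tf_imgT !rank_imgT DmT !mul1mx in rk.
rewrite ef Tf_imgT diff_img card_imgT !rank_imgT eX rank_imgT.
rewrite DmT !mul1mx.
have := duality_core Z rk (orth_UW o).
lia.
Qed.

Lemma SS_split G (T1 T2 X : {set 'I_n * 'I_3}) : [disjoint T1 & T2] ->
  X \subset T1 :|: T2 -> SS G X = (SS G (X :&: T1) + SS G (X :&: T2))%MS.
Proof.
move=> dj sX; rewrite /SS (bigID (mem T1)) /=; congr (_ + _)%MS.
  by apply: eq_bigl => w; rewrite inE.
apply: eq_bigl => w; rewrite inE; case wX: (w \in X) => //=.
case w1: (w \in T1) => /=; first by rewrite (disjointFr dj w1).
by have := subsetP sX _ wX; rewrite inE w1.
Qed.

Lemma good_meq G t1 t2 : good G t1 t2 ->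
  meq (restrict (MIAS G) (Tf t1 :|: Tf t2))
      (dsum (restrict (MIAS G) (Tf t1)) (restrict (MIAS G) (Tf t2))).
Proof.
move=> [d c]; split => // X sX.
change (mrank (MIAS G) X = mrank (MIAS G) (X :&: Tf t1) + mrank (MIAS G) (X :&: Tf t2))%N.
rewrite !mrankE (SS_split G (Tf_disj d) sX).
have := mxrank_sum_cap (SS G (X :&: Tf t1)) (SS G (X :&: Tf t2)).
have z : (SS G (X :&: Tf t1) :&: SS G (X :&: Tf t2) = 0)%MS.
  apply/eqP; rewrite -submx0 -c; apply: capmxS; apply: SS_sub; exact: subsetIr.
by rewrite z mxrank0 addn0.
Qed.

Lemma meq_good G t1 t2 : (forall v, t1 v != t2 v) ->
  meq (restrict (MIAS G) (Tf t1 :|: Tf t2))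
      (dsum (restrict (MIAS G) (Tf t1)) (restrict (MIAS G) (Tf t2))) ->
  good G t1 t2.
Proof.
move=> d [_ h]; apply: good_rank => //.
have e : (mrank (MIAS G) (Tf t1 :|: Tf t2) = mrank (MIAS G) ((Tf t1 :|: Tf t2) :&: Tf t1)
   + mrank (MIAS G) ((Tf t1 :|: Tf t2) :&: Tf t2))%N := h _ (subxx _).
move: e.
have e2 : (Tf t1 :|: Tf t2) :&: Tf t2 = Tf t2 by rewrite setIC setKU.
rewrite setUK e2 !mrankE (SS_split G (Tf_disj d) (subxx _)) setUK e2.
by rewrite SS_full.
Qed.

Lemma miso_good G t1 t2 : (forall v, t1 v != t2 v) ->
  miso (restrict (MIAS G) (Tf t1)) (dual (restrict (MIAS G) (Tf t2))) ->
  good G t1 t2.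
Proof.
move=> d [f [_ im h]]; apply: good_rank => //.
have e : mrank (dual (restrict (MIAS G) (Tf t2))) (f @: Tf t1) = mrank (MIAS G) (Tf t1)
  := h _ (subxx _).
move: e; rewrite im mrank_dualE setDv.
rewrite mrankE card_Tf /SS big_set0 mxrank0 addn0.
have := rank_leq_col (SS G (Tf t2)); rewrite /SS.
lia.
Qed.

End Aux.

Theorem corollary5p3 (n : nat) (G : lgraph n) (HG : simple_lgraph G) :
  let M := MIAS G in
  [<-> exists H, loc_equiv G H /\ bipartite H;
       exists T1 T2 : {set 'I_n * 'I_3}, [/\ transversalW T1, transversalW T2, [disjoint T1 & T2] &
                        (mrank M T1 + mrank M T2)%N = n];
       exists T1 T2 : {set 'I_n * 'I_3}, [/\ transversalW T1, transversalW T2, [disjoint T1 & T2] &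
                        meq (restrict M (T1 :|: T2))
                            (dsum (restrict M T1) (restrict M T2))];
       exists T1 T2 : {set 'I_n * 'I_3}, [/\ transversalW T1, transversalW T2, [disjoint T1 & T2] &
                        miso (restrict M T1) (dual (restrict M T2))]].
Proof.
move=> M; rewrite /M.
tfae.
- move=> [H [lH bH]]; have [t1 [t2 g]] := bip_good HG lH bH.
  exists (Tf t1), (Tf t2); split; try exact: Tf_trans.
    by apply: Tf_disj; case: g.
  by rewrite !mrankE; apply: good_rank'.
- move=> [T1 [T2 [tr1 tr2 dj rk]]].
  have [t1 e1] := transW_Tf tr1; have [t2 e2] := transW_Tf tr2; subst T1 T2.
  have d := disj_Tf dj.
  rewrite !mrankE in rk; have g := good_rank d rk.
  by exists (Tf t1), (Tf t2); split => //; apply: good_meq.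
- move=> [T1 [T2 [tr1 tr2 dj hm]]].
  have [t1 e1] := transW_Tf tr1; have [t2 e2] := transW_Tf tr2; subst T1 T2.
  have d := disj_Tf dj.
  have g := meq_good d hm.
  have [_ o] := good_bip HG g.
  by exists (Tf t1), (Tf t2); split => //; apply: good_dual.
- move=> [T1 [T2 [tr1 tr2 dj hm]]].
  have [t1 e1] := transW_Tf tr1; have [t2 e2] := transW_Tf tr2; subst T1 T2.
  have d := disj_Tf dj.
  have g := miso_good d hm.
  by have [] := good_bip HG g.
Qed.
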